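(* Let $G$ be a weak FI-group, let $H\lhd G$ be a normal weak FI-subgroup, and fix $N\geq 0$. Then $H^{\leq N}$ is a normal weak FI-subgroup of $G$.
   Context: $\mathrm{FI}$ is the category of finite subsets of $\mathbb{N}$ and injections. For groups $A,B$, a homomorphism-modulo-conjugacy $A\to B$ is an equivalence class of homomorphisms under post-composition with conjugations by elements of $B$. A weak FI-group $G$ consists of: groups $G_I$ for finite $I\subset\mathbb{N}$; for each injection $f\colon I\hookrightarrow J$ a homomorphism-modulo-conjugacy $G_f\colon G_I\to G_J$ with $G_{\mathrm{id}}=\mathrm{id}$ and $G_{g\circ f}=G_g\circ G_f$ modulo conjugacy; and for each $I\subset J$ a homomorphism $G_I^J\colon G_I\to G_J$ representing $G_f$ for the inclusion $f$, with $G_J^K\circ G_I^J=G_I^K$. A normal weak FI-subgroup $H\lhd G$ is a choice of normal subgroups $H_I\lhd G_I$ with $G_f(H_I)\subset H_J$ for every injection $f\colon I\hookrightarrow J$. For $I\subset J$ set $H_J(I)=G_I^J(H_I)$. For $N\geq 0$ and finite $J$, $H^{\leq N}_J$ is the subgroup of $G_J$ generated by the $G_J$-conjugates of the subgroups $H_J(I)$ for $I\subset J$ with $|I|\leq N$. *)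

(* Defs.v *)
(* possibly infinite groups via mathcomp's [groupType]
   (boot/monoid.v), finite subsets of N via finmap's [{fset nat}]. *)
From HB Require Import structures.
From mathcomp Require Import all_boot.
From mathcomp Require Import finmap.

Set Implicit Arguments.
Unset Strict Implicit.
Unset Printing Implicit Defensive.

Local Open Scope fset_scope.
Local Open Scope group_scope.

Definition is_hom (A B : groupType) (f : A -> B) : Prop :=
  forall x y : A, f (x * y) = f x * f y.

(* Equality modulo conjugacy of two maps A -> B:
   phi = c_b o psi for some b in B (c_b(y) = b^-1 y b, any convention works). *)
Definition conj_equiv (A B : groupType) (phi psi : A -> B) : Prop :=
  exists b : B, forall x : A, phi x = (psi x) ^ b.

Definition id_map (I : {fset nat}) : {ffun I -> I} := [ffun x => x].
Definition comp_map (I J K : {fset nat}) (g : {ffun J -> K}) (f : {ffun I -> J})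
  : {ffun I -> K} := [ffun x => g (f x)].
Definition incl_map (I J : {fset nat}) (IJ : I `<=` J) : {ffun I -> J} :=
  [ffun x => fincl IJ x].

(* The homomorphism-modulo-conjugacy G_f is given by a
   chosen representative [Gmap f] (only meaningful for injective f);
   the identities G_id = id and G_{g o f} = G_g o G_f hold modulo conjugacy.
   [Gincl IJ] is the distinguished representative G_I^J for I ⊆ J. *)
Definition is_weakFIgroup (G : {fset nat} -> groupType)
  (Gmap : forall I J : {fset nat}, {ffun I -> J} -> G I -> G J)
  (Gincl : forall I J : {fset nat}, I `<=` J -> G I -> G J) : Prop :=
  [/\ (forall I J : {fset nat}, forall (f : {ffun I -> J}), injective f -> is_hom (Gmap I J f)),
      (forall I : {fset nat}, conj_equiv (Gmap I I (id_map I)) id) &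
      (forall I J K : {fset nat}, forall (f : {ffun I -> J}) (g : {ffun J -> K}),
          injective f -> injective g ->
          conj_equiv (Gmap I K (comp_map g f)) (Gmap J K g \o Gmap I J f))] /\
  [/\ (forall I J : {fset nat}, forall (IJ : I `<=` J), is_hom (Gincl I J IJ)),
      (forall I J : {fset nat}, forall (IJ : I `<=` J),
          conj_equiv (Gincl I J IJ) (Gmap I J (incl_map IJ))) &
      (forall I J K : {fset nat}, forall (IJ : I `<=` J) (JK : J `<=` K) (x : G I),
          Gincl J K JK (Gincl I J IJ x) = Gincl I K (fsubset_trans IJ JK) x)].

Definition is_subgroup (A : groupType) (S : A -> Prop) : Prop :=
  [/\ S 1, (forall x y, S x -> S y -> S (x * y)) & (forall x, S x -> S x^-1)].

Definition is_normal (A : groupType) (S : A -> Prop) : Prop :=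
  is_subgroup S /\ (forall x g : A, S x -> S (x ^ g)).

Definition gen_subgroup (A : groupType) (S : A -> Prop) : A -> Prop :=
  fun x => forall K : A -> Prop, is_subgroup K -> (forall y, S y -> K y) -> K x.

Definition is_normal_weakFIsubgroup (G : {fset nat} -> groupType)
  (Gmap : forall I J : {fset nat}, {ffun I -> J} -> G I -> G J)
  (H : forall I : {fset nat}, G I -> Prop) : Prop :=
  (forall I : {fset nat}, is_normal (H I)) /\
  (forall I J : {fset nat}, forall (f : {ffun I -> J}), injective f ->
      forall x : G I, H I x -> H J (Gmap I J f x)).

Definition H_restr (G : {fset nat} -> groupType)
  (Gincl : forall I J : {fset nat}, I `<=` J -> G I -> G J)
  (H : forall I : {fset nat}, G I -> Prop) (J I : {fset nat}) (IJ : I `<=` J)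
  : G J -> Prop :=
  fun y => exists2 h : G I, H I h & y = Gincl I J IJ h.

Definition H_le (G : {fset nat} -> groupType)
  (Gincl : forall I J : {fset nat}, I `<=` J -> G I -> G J)
  (H : forall I : {fset nat}, G I -> Prop) (N : nat) (J : {fset nat})
  : G J -> Prop :=
  gen_subgroup (fun y : G J =>
    exists (I : {fset nat}) (IJ : I `<=` J) (y0 g : G J),
      [/\ (#|` I| <= N)%N, H_restr Gincl H IJ y0 & y = y0 ^ g]).

(* Main.v *)
Require Import Defs.
From HB Require Import structures.
From mathcomp Require Import all_boot.
From mathcomp Require Import finmap.
Set Implicit Arguments.
Unset Strict Implicit.
Local Open Scope fset_scope.
Local Open Scope group_scope.

Lemma hom1 (A B : groupType) (f : A -> B) : is_hom f -> f 1 = 1.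
Proof. move=> hf; apply: (@mulgI _ (f 1)); by rewrite -hf !mulg1. Qed.
Lemma homV (A B : groupType) (f : A -> B) x : is_hom f -> f x^-1 = (f x)^-1.
Proof. move=> hf; symmetry; apply: mulg1_eq; by rewrite -hf mulgV hom1. Qed.
Lemma homJ (A B : groupType) (f : A -> B) x g : is_hom f -> f (x ^ g) = f x ^ f g.
Proof. move=> hf; by rewrite !conjgE !hf homV. Qed.

Lemma gen_sub (A : groupType) (S : A -> Prop) : is_subgroup (gen_subgroup S).
Proof.
split.
- by move=> K [] .
- by move=> x y hx hy K hK hS; case: (hK) => _ hM _; apply: hM; [apply: hx|apply: hy].
- by move=> x hx K hK hS; case: (hK) => _ _ hV; apply: hV; apply: hx.
Qed.

Lemma gen_incl (A : groupType) (S : A -> Prop) x : S x -> gen_subgroup S x.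
Proof. by move=> Sx K _ hS; apply: hS. Qed.

Lemma gen_hom (A B : groupType) (S : A -> Prop) (T : B -> Prop) (f : A -> B) :
  is_hom f -> (forall y, S y -> gen_subgroup T (f y)) ->
  forall x, gen_subgroup S x -> gen_subgroup T (f x).
Proof.
move=> hf hST x hx; apply: (hx (fun x => gen_subgroup T (f x))) => //.
case: (@gen_sub _ T) => h1 hM hV; split.
- by rewrite hom1.
- by move=> a b ha hb; rewrite hf; apply: hM.
- by move=> a ha; rewrite homV //; apply: hV.
Qed.
Section K.
Variables (I J I' : {fset nat}) (f : {ffun I -> J}) (s : I' `<=` I).
Definition hfun (n : nat) : nat :=
  if (insub n : option I) is Some x then val (f x) else n.
Lemma hfunE (x : I') : hfun (val x) = val (f (fincl s x)).
Proof.
rewrite /hfun; case: insubP => [u _ eu|].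
  by congr (val (f _)); apply: val_inj; rewrite eu.
by rewrite (fsubsetP s _ (valP x)).
Qed.
Definition I2 := hfun @` I'.
Lemma I2_mem (x : I') : val (f (fincl s x)) \in I2.
Proof. by rewrite -hfunE; apply: in_imfset; exact: (valP x). Qed.
Lemma I2_sub : I2 `<=` J.
Proof. by apply/fsubsetP=> n /imfsetP [m /= mI ->]; rewrite (hfunE [` mI]) (valP (f _)). Qed.
Definition f2 : {ffun I' -> I2} := [ffun x => [` I2_mem x]].
Lemma f2_inj : injective f -> injective f2.
Proof.
move=> fi x y; rewrite !ffunE => /(congr1 val) /= /val_inj /fi /(congr1 val) /=.
by move/val_inj.
Qed.
Lemma comp_eq : comp_map f (incl_map s) = comp_map (incl_map I2_sub) f2.
Proof. apply/ffunP=> x; rewrite !ffunE; apply: val_inj; by []. Qed.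
Lemma I2_card : (#|` I2| <= #|` I'|)%N.
Proof. exact: leq_imfset_card. Qed.
End K.

Lemma incl_inj (I J : {fset nat}) (s : I `<=` J) : injective (incl_map s).
Proof. by move=> x y; rewrite !ffunE; apply: fincl_inj. Qed.

Lemma key (G : {fset nat} -> groupType)
  (Gmap : forall I J : {fset nat}, {ffun I -> J} -> G I -> G J)
  (Gincl : forall I J : {fset nat}, I `<=` J -> G I -> G J)
  (H : forall I : {fset nat}, G I -> Prop) :
  is_weakFIgroup Gmap Gincl -> is_normal_weakFIsubgroup Gmap H ->
  forall (I J I' : {fset nat}) (f : {ffun I -> J}), injective f ->
  forall (s : I' `<=` I) h, H I' h ->
  exists I'' (s'' : I'' `<=` J) z c, [/\ (#|` I''| <= #|` I'|)%N,
     H_restr Gincl H s'' z & Gmap I J f (Gincl I' I s h) = z ^ c].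
Proof.
move=> [[hom _ hcomp] [_ hincl _]] [_ hH] I J I' f finj s h hh.
exists (I2 I' f), (I2_sub f s), (Gincl _ _ (I2_sub f s) (Gmap _ _ (f2 f s) h)).
have [b1 e1] := hincl _ _ s.
have [b2 e2] := hcomp _ _ _ (incl_map s) f (@incl_inj _ _ s) finj.
have [b3 e3] := hcomp _ _ _ (f2 f s) (incl_map (I2_sub f s)) (f2_inj (s:=s) finj) (@incl_inj _ _ _).
have [b4 e4] := hincl _ _ (I2_sub f s).
exists ((b4^-1 * b3) * (b2^-1 * Gmap _ _ f b1)).
split.
- exact: (I2_card I' f).
- by exists (Gmap _ _ (f2 f s) h) => //; apply: hH => //; apply: f2_inj.
rewrite e1 homJ //.
have := e2 h; rewrite comp_eq /= => e2'.
have -> : Gmap I J f (Gmap I' I (incl_map s) h) =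
   Gmap I' J (comp_map (incl_map (I2_sub f s)) (f2 f s)) h ^ b2^-1 by rewrite e2' conjgK.
rewrite e3 /= e4 !conjgM.
  by rewrite conjgK.
exact: hom.
Qed.

Theorem lemma2p19
  (G : {fset nat} -> groupType)
  (Gmap : forall I J : {fset nat}, {ffun I -> J} -> G I -> G J)
  (Gincl : forall I J : {fset nat}, I `<=` J -> G I -> G J)
  (H : forall I : {fset nat}, G I -> Prop)
  (N : nat) :
  @is_weakFIgroup G Gmap Gincl ->
  @is_normal_weakFIsubgroup G Gmap H ->
  @is_normal_weakFIsubgroup G Gmap (@H_le G Gincl H N).
Proof.
move=> hG hHn; have hG' := hG; have hHn' := hHn.
case: hG' => [[hom _ _] _].
split.
- move=> I; split; first exact: gen_sub.
  move=> x g hx; apply: (gen_hom (f := fun x => x ^ g)) hx.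
    by move=> a b; rewrite conjMg.
  move=> y [I' [IJ [y0 [g0 [hc hr ->]]]]]; apply: gen_incl.
  by exists I', IJ, y0, (g0 * g); split => //; rewrite conjgM.
- move=> I J f finj x hx; apply: (gen_hom (f := Gmap I J f)) hx; first exact: hom.
  move=> y [I' [IJ [y0 [g0 [hc [h hh ->] ->]]]]]; apply: gen_incl.
  rewrite homJ; last exact: hom.
  have [I'' [s'' [z [c [hc' hz ->]]]]] := key hG hHn finj IJ hh.
  exists I'', s'', z, (c * Gmap I J f g0); split.
  + exact: leq_trans hc' hc.
  + exact: hz.
  + by rewrite conjgM.
Qed.
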